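(* Let $b\ge 2$ and $n\ge 0$ be integers. Then $b\,s_{n+1}\notin \mathrm{Ap}(T_b(n),s_0)$.
   Context: For integers $b\ge 2$, $n\ge 0$, $i\ge0$ put $s_i=(b+1)b^{n+i}-1$ and $T_b(n)=\langle\{s_i:i\in\mathbb{N}\}\rangle$ (a numerical semigroup). For a numerical semigroup $S$ and $x\in S\setminus\{0\}$, $\mathrm{Ap}(S,x)=\{s\in S: s-x\notin S\}$. *)

(* Defs.v *)
From mathcomp Require Import all_boot.
Set Implicit Arguments. Unset Strict Implicit. Unset Printing Implicit Defensive.

Definition s (b n i : nat) : nat := (b + 1) * b ^ (n + i) - 1.

Inductive T (b n : nat) : nat -> Prop :=
  | T_zero : T b n 0
  | T_gen (i : nat) : T b n (s b n i)
  | T_add (x y : nat) : T b n x -> T b n y -> T b n (x + y).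

(* Ap(S, x) = { m in S : m - x notin S }, where m - x is the integer
   difference; for m < x it is negative, hence not in S. *)
Definition Ap (S : nat -> Prop) (x m : nat) : Prop :=
  S m /\ ~ (x <= m /\ S (m - x)).

(* Main.v *)
Require Import Defs.
From mathcomp Require Import all_boot all_algebra.
From mathcomp Require Import ring zify.
Import GRing.Theory.

Lemma key b P : 2 <= b -> 1 <= P ->
  b * ((b + 1) * (P * (P * b)) - 1) =
  ((b + 1) * P - 1) + (((b + 1) * (P * P) - 1) + ((b - 1) * (b + 1) * P + b - 2) * ((b + 1) * P - 1)).
Proof.
move=> hb hP.
have h1 : 1 <= (b + 1) * P by rewrite muln_gt0; lia.
have h2 : 1 <= (b + 1) * (P * P) by rewrite !muln_gt0; lia.
have h3 : 1 <= (b + 1) * (P * (P * b)) by rewrite !muln_gt0; lia.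
have h4 : 1 <= b by lia.
apply/eqP; rewrite -eqz_nat; apply/eqP.
rewrite !(PoszD, PoszM) ?subzn // ?(PoszD, PoszM) ?subzn //; last lia.
Qed.

Lemma T_mul (b n m : nat) x : T b n x -> T b n (m * x).
Proof.
move=> Hx; elim: m => [|m IH]; first by rewrite mul0n; exact: T_zero.
by rewrite mulSn; apply: T_add.
Qed.

Theorem mainTheorem9 (b n : nat) (hb : 2 <= b) :
  ~ Ap (T b n) (s b n 0) (b * s b n (n + 1)).
Proof.
move=> [_ H]; apply: H.
have HP : 1 <= b ^ n by rewrite expn_gt0; lia.
have E : b * s b n (n + 1) = s b n 0 + (s b n n + ((b - 1) * (b + 1) * b ^ n + b - 2) * s b n 0).
  rewrite /s addn0 !expnD expn1; exact: key.
rewrite E; split; first exact: leq_addr.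
rewrite addKn; apply: T_add; [exact: T_gen | exact: T_mul (T_gen _ _ _)].
Qed.
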